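(* Let $J\in\mathbb{R}\cup\{\infty\}$ and $K\in\mathbb{R}$ with $J>K$. If $(x_n)_{n\in\mathbb{Z}}\in\mathcal{X}^!_{J,K}$, then there exists at most one sequence $(u_n)_{n\in\mathbb{Z}}\in\mathbb{R}^{\mathbb{Z}}$ such that $\left(F^{(J,K)}_{udK}\right)^{(2)}(x_n,u_{n-1})=u_n$ for all $n\in\mathbb{Z}$.
   Context: $F^{(J,K)}_{udK}(x,u):=\big(u-\max\{x+u-J,0\}+\max\{x+u-K,0\},\;x-\max\{x+u-K,0\}+\max\{x+u-J,0\}\big)$ for $x,u\in\mathbb{R}$, with $\max\{x+u-\infty,0\}:=0$; the superscript $(2)$ denotes the second coordinate. For $J=\infty>K$, $\mathcal{X}^!_{J,K}:=\{(x_n)_{n\in\mathbb{Z}}\in\mathbb{R}^{\mathbb{Z}}:\limsup_{n\to-\infty}\mathbf{1}_{\{x_n+x_{n+1}\le K\}}=1\}$; for $\infty>J>K$, $\mathcal{X}^!_{J,K}:=\{(x_n)_{n\in\mathbb{Z}}:\limsup_{n\to-\infty}\mathbf{1}_{\{x_n+x_{n+1}\le K\}\cup\{x_n+x_{n+1}\ge2J-K\}}=1\}$. *)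

(* Defs.v *)
From Stdlib Require Import Reals ZArith.
Open Scope R_scope.

(* J ∈ R ∪ {∞} is modelled as [option R]: [None] = ∞, [Some j] = j. *)
Definition Rbar_J := option R.

Definition maxJ (J : option R) (s : R) : R :=
  match J with None => 0 | Some j => Rmax (s - j) 0 end.

Definition F_udK (J : option R) (K : R) (x u : R) : R * R :=
  (u - maxJ J (x + u) + Rmax (x + u - K) 0,
   x - Rmax (x + u - K) 0 + maxJ J (x + u)).

Definition J_gt_K (J : option R) (K : R) : Prop :=
  match J with None => True | Some j => j > K end.

Definition X_event (J : option R) (K : R) (x : Z -> R) (n : Z) : Prop :=
  match J with
  | None => x n + x (n + 1)%Z <= K
  | Some j => x n + x (n + 1)%Z <= K \/ x n + x (n + 1)%Z >= 2 * j - K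
  end.

(* limsup_{n -> -∞} 1_{event n} = 1, i.e. the event occurs for
   infinitely many negative n (arbitrarily negative n). *)
Definition in_Xbang (J : option R) (K : R) (x : Z -> R) : Prop :=
  forall N : Z, exists n : Z, (n <= N)%Z /\ X_event J K x n.

(* Main.v *)
Require Import Defs.
From Stdlib Require Import Reals ZArith Lra Lia.
Open Scope R_scope.

Ltac kill_max := unfold Rmax in *; repeat (destruct Rle_dec in *); try lra.

Lemma step_eq (J : option R) (K : R) (x : Z -> R) (w : Z -> R) (m : Z) :
  J_gt_K J K -> X_event J K x m ->
  (forall n : Z, snd (F_udK J K (x n) (w (n - 1)%Z)) = w n) ->
  w (m + 1)%Z = match J with
                | None => x (m + 1)%Z
                | Some j => if Rle_dec (x m + x (m + 1)%Z) K then x (m + 1)%Z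
                            else x (m + 1)%Z + K - j end.
Proof.
  intros HJ He Hw.
  pose proof (Hw m) as H0. pose proof (Hw (m + 1)%Z) as H1.
  replace (m + 1 - 1)%Z with m in H1 by ring.
  destruct J as [j|]; simpl in *; unfold maxJ in *; simpl in *.
  - destruct (Rle_dec (x m + x (m + 1)%Z) K) as [Hle|Hnle].
    + kill_max.
    + destruct He as [He|He]; [lra|]. kill_max.
  - kill_max.
Qed.

Theorem lemma3p5 (J : option R) (K : R) (x : Z -> R) :
  J_gt_K J K ->
  in_Xbang J K x ->
  forall u v : Z -> R,
    (forall n : Z, snd (F_udK J K (x n) (u (n - 1)%Z)) = u n) ->
    (forall n : Z, snd (F_udK J K (x n) (v (n - 1)%Z)) = v n) ->
    forall n : Z, u n = v n.
Proof.
  intros HJ HX u v Hu Hv n.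
  destruct (HX (n - 1)%Z) as [m [Hm He]].
  assert (Hb : u (m + 1)%Z = v (m + 1)%Z).
  { rewrite (step_eq J K x u m HJ He Hu), (step_eq J K x v m HJ He Hv). reflexivity. }
  assert (Hall : forall k : nat, u (m + 1 + Z.of_nat k)%Z = v (m + 1 + Z.of_nat k)%Z).
  { induction k as [|k IH].
    - replace (m + 1 + Z.of_nat 0)%Z with (m + 1)%Z by lia. exact Hb.
    - rewrite <- (Hu (m + 1 + Z.of_nat (S k))%Z), <- (Hv (m + 1 + Z.of_nat (S k))%Z).
      replace (m + 1 + Z.of_nat (S k) - 1)%Z with (m + 1 + Z.of_nat k)%Z by lia.
      rewrite IH. reflexivity. }
  specialize (Hall (Z.to_nat (n - (m + 1)))).
  rewrite Z2Nat.id in Hall by lia.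
  replace (m + 1 + (n - (m + 1)))%Z with n in Hall by ring. exact Hall.
Qed.
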